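(* Let $f:\mathbb{R}^d\to\mathbb{R}$ and $P:\mathbb{R}^d\to\mathbb{R}^s$ be continuously differentiable, $D\subseteq\mathbb{R}^s$ closed, $\Omega=\{z\mid P(z)\in D\}$, $\bar z\in\Omega$, and assume that GGCQ holds at $\bar z$. Then $\bar z$ is a sharp minimum of the problem $\min f(z)$ s.t. $P(z)\in D$ if and only if there is some $\alpha'>0$ such that \[\langle\nabla f(\bar z),u\rangle\ge\alpha'\|u\|\quad\forall u\in T^{\rm lin}_{P,D}(\bar z).\]
   Context: Tangent cone $T_\Omega(\bar z)=\{w\mid \exists t_k\downarrow0,\ w_k\to w,\ \bar z+t_kw_k\in\Omega\}$; polar cone $K^\ast=\{z^\ast\mid\langle z^\ast,w\rangle\le0\ \forall w\in K\}$; regular normal cone $\widehat N_\Omega(\bar z)=(T_\Omega(\bar z))^\ast$. Linearized tangent cone $T^{\rm lin}_{P,D}(\bar z)=\{u\mid\nabla P(\bar z)u\in T_D(P(\bar z))\}$. GGCQ holds at $\bar z$ if $\widehat N_\Omega(\bar z)=(T^{\rm lin}_{P,D}(\bar z))^\ast$. A point $\bar z\in\Omega$ is a sharp minimum if there is $\alpha>0$ such that $f(z)\ge f(\bar z)+\alpha\|z-\bar z\|$ for all $z\in\Omega$ close to $\bar z$. *)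

(* Defs.v *)
From HB Require Import structures.
From mathcomp Require Import all_boot all_order all_algebra.
From mathcomp Require Import all_classical all_reals all_analysis.
Set Implicit Arguments. Unset Strict Implicit. Unset Printing Implicit Defensive.
Import Order.TTheory GRing.Theory Num.Theory.
Import numFieldNormedType.Exports.
Local Open Scope classical_set_scope.
Local Open Scope ring_scope.

Definition dotv {R : realType} {n : nat} (a b : 'rV[R]_n) : R :=
  \sum_(i < n) a 0 i * b 0 i.
Definition enorm {R : realType} {n : nat} (a : 'rV[R]_n) : R :=
  Num.sqrt (dotv a a).

(* continuously differentiable map between finite-dim. spaces:
   differentiable everywhere, with x |-> 'd f x continuous
   (tested pointwise on directions; equivalent in finite dimension) *)
Definition C1 {R : realType} {n m : nat} (f : 'rV[R]_n -> 'rV[R]_m) : Prop :=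
  (forall x, differentiable f x) /\ (forall v, continuous (fun x => 'd f x v)).
Definition C1R {R : realType} {n : nat} (f : 'rV[R]_n -> R) : Prop :=
  (forall x, differentiable f x) /\ (forall v, continuous (fun x => 'd f x v)).

Definition tangent_cone {R : realType} {n : nat} (Om : set 'rV[R]_n) (z : 'rV[R]_n)
  : set 'rV[R]_n :=
  [set w | exists (t : nat -> R) (wk : nat -> 'rV[R]_n),
     (forall k, 0 < t k) /\ t @ \oo --> (0 : R) /\ wk @ \oo --> w /\
     (forall k, Om (z + t k *: wk k))].

Definition polar {R : realType} {n : nat} (K : set 'rV[R]_n) : set 'rV[R]_n :=
  [set zs | forall w, K w -> dotv zs w <= 0].

Definition reg_normal_cone {R : realType} {n : nat} (Om : set 'rV[R]_n) z :=
  polar (tangent_cone Om z).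

Definition lin_tangent_cone {R : realType} {d s : nat}
  (P : 'rV[R]_d -> 'rV[R]_s) (D : set 'rV[R]_s) (z : 'rV[R]_d) : set 'rV[R]_d :=
  [set u | tangent_cone D (P z) ('d P z u)].

Definition feas {R : realType} {d s : nat} (P : 'rV[R]_d -> 'rV[R]_s)
  (D : set 'rV[R]_s) : set 'rV[R]_d := [set z | D (P z)].

Definition GGCQ {R : realType} {d s : nat} (P : 'rV[R]_d -> 'rV[R]_s)
  (D : set 'rV[R]_s) (z : 'rV[R]_d) : Prop :=
  reg_normal_cone (feas P D) z = polar (lin_tangent_cone P D z).

Definition sharp_min {R : realType} {n : nat} (f : 'rV[R]_n -> R)
  (Om : set 'rV[R]_n) (z : 'rV[R]_n) : Prop :=
  exists2 alpha : R, 0 < alpha &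
    \forall y \near z, Om y -> f z + alpha * enorm (y - z) <= f y.

(* Main.v *)
Require Import Defs.
From mathcomp Require Import all_boot all_order all_algebra.
From mathcomp Require Import all_classical all_reals all_analysis.
From mathcomp Require Import ring lra zify.
Import Order.TTheory GRing.Theory Num.Theory.
Import numFieldNormedType.Exports.
Local Open Scope classical_set_scope.
Local Open Scope ring_scope.
Set Implicit Arguments. Unset Strict Implicit. Unset Printing Implicit Defensive.

Section Dot.
Variables (R : realType) (n : nat).
Implicit Types (x y u w : 'rV[R]_n).

Lemma dotvC x y : dotv x y = dotv y x.
Proof. by apply: eq_bigr => i _; rewrite mulrC. Qed.

Lemma dotvDl x y w : dotv (x + y) w = dotv x w + dotv y w.
Proof. by rewrite /dotv -big_split; apply: eq_bigr => i _; rewrite mxE mulrDl. Qed.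

Lemma dotvZl (c : R) x w : dotv (c *: x) w = c * dotv x w.
Proof. by rewrite /dotv mulr_sumr; apply: eq_bigr => i _; rewrite mxE mulrA. Qed.

Lemma dotvNl x w : dotv (- x) w = - dotv x w.
Proof. by rewrite -scaleN1r dotvZl mulN1r. Qed.

Lemma dotvDr x y w : dotv w (x + y) = dotv w x + dotv w y.
Proof. by rewrite !(dotvC w) dotvDl. Qed.

Lemma dotvZr (c : R) x w : dotv w (c *: x) = c * dotv w x.
Proof. by rewrite !(dotvC w) dotvZl. Qed.

Lemma dotv0r x : dotv x 0 = 0.
Proof. by rewrite /dotv big1 // => i _; rewrite mxE mulr0. Qed.

Lemma dotv_ge0 x : 0 <= dotv x x.
Proof. by apply: sumr_ge0 => i _; rewrite -expr2 sqr_ge0. Qed.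

Lemma enorm_ge0 x : 0 <= enorm x.
Proof. exact: sqrtr_ge0. Qed.

Lemma enorm_sqr x : enorm x ^+ 2 = dotv x x.
Proof. by rewrite sqr_sqrtr // dotv_ge0. Qed.

Lemma enorm_eq0 x : enorm x = 0 -> x = 0.
Proof.
move=> /eqP; rewrite sqrtr_eq0 => H.
have H0 : dotv x x = 0 by apply/eqP; rewrite eq_le H dotv_ge0.
have := (psumr_eq0P (P := predT) (F := fun i => x 0 i * x 0 i)).
move=> /(_ (fun i _ => ltac:(rewrite -expr2; exact: sqr_ge0)) H0) Hi.
apply/rowP => i; rewrite mxE; apply/eqP; rewrite -sqrf_eq0 expr2; apply/eqP.
exact: Hi.
Qed.

Lemma enorm0 : enorm (0 : 'rV[R]_n) = 0.
Proof. by rewrite /enorm dotv0r sqrtr0. Qed.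

Lemma enormZ (c : R) x : enorm (c *: x) = `|c| * enorm x.
Proof.
by rewrite /enorm dotvZl dotvZr mulrA -expr2 sqrtrM ?sqr_ge0 // sqrtr_sqr.
Qed.

Lemma CS u w : dotv u w <= enorm u * enorm w.
Proof.
have [u0|] := eqVneq (enorm u) 0.
  by rewrite (enorm_eq0 u0) dotvC dotv0r enorm0 mul0r.
have [w0|] := eqVneq (enorm w) 0.
  by rewrite (enorm_eq0 w0) dotv0r enorm0 mulr0.
move=> wn0 un0.
have up : 0 < enorm u by rewrite lt_def un0 enorm_ge0.
have wp : 0 < enorm w by rewrite lt_def wn0 enorm_ge0.
set l := enorm w / enorm u.
have lp : 0 < l by rewrite divr_gt0.
have key : 2 * l * dotv u w <= l ^+ 2 * dotv u u + dotv w w.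
  rewrite /dotv mulr_sumr mulr_sumr -big_split /=; apply: ler_sum => i _.
  have := sqr_ge0 (l * u 0 i - w 0 i); lra.
have lu : l * enorm u = enorm w by rewrite /l divfK.
rewrite -!enorm_sqr in key.
have E1 : enorm w ^+ 2 = l ^+ 2 * enorm u ^+ 2 by rewrite -lu exprMn.
have E2 : l * (enorm u * enorm w) = l ^+ 2 * enorm u ^+ 2.
  by rewrite -lu; rewrite expr2 expr2; ring.
have : l * dotv u w <= l * (enorm u * enorm w).
  rewrite E2; rewrite E1 -mulrA in key.
  move: key; move: (l * dotv u w) (l ^+ 2 * enorm u ^+ 2) => a b; lra.
by rewrite ler_pM2l.
Qed.

Lemma enormD x y : enorm (x + y) <= enorm x + enorm y.
Proof.
rewrite -(ger0_norm (addr_ge0 (enorm_ge0 x) (enorm_ge0 y))) -sqrtr_sqr.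
rewrite [leLHS]/enorm ler_sqrt ?sqr_ge0 // dotvDl !dotvDr (dotvC y x).
have := CS x y; rewrite -!enorm_sqr sqrrD; lra.
Qed.

Lemma entry_le_enorm x i : `|x 0 i| <= enorm x.
Proof.
rewrite -sqrtr_sqr ler_sqrt ?dotv_ge0 // /dotv (bigD1 i) //= -expr2 lerDl.
by apply: sumr_ge0 => j _; rewrite -expr2 sqr_ge0.
Qed.

Lemma norm_le_enorm x : `|x| <= enorm x.
Proof.
have -> : `|x| = mx_norm x by []. rewrite mx_normrE; apply: bigmax_le; first exact: enorm_ge0.
by move=> [i j] _ /=; rewrite (ord1 i); apply: entry_le_enorm.
Qed.

Lemma entry_le_norm x i : `|x 0 i| <= `|x|.
Proof.
have -> : `|x| = mx_norm x by []. rewrite mx_normrE.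
by apply/bigmax_geP; right => /=; exists (ord0, i).
Qed.

Lemma enorm_le_norm x : enorm x <= n.+1%:R * `|x|.
Proof.
rewrite -(ger0_norm (mulr_ge0 (ler0n _ _) (normr_ge0 x))) -sqrtr_sqr /enorm.
rewrite ler_sqrt ?sqr_ge0 //.
apply: (@le_trans _ _ (\sum_(i < n) `|x|^+2)).
  apply: ler_sum => i _; rewrite -expr2 -real_normK ?num_real //.
  by rewrite lerXn2r ?nnegrE ?normr_ge0 // entry_le_norm.
rewrite sumr_const card_ord -[_ *+ n]mulr_natl exprMn.
apply: ler_wpM2r; first exact: sqr_ge0.
rewrite -natrX ler_nat; case: n => // m; nia.
Qed.

End Dot.

Lemma gradient (R : realType) d (f : 'rV[R]_d -> R) z :
  exists G, forall u, 'd f z u = dotv G u.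
Proof.
exists (\row_i 'd f z (delta_mx 0 i)) => u.
rewrite {1}(row_sum_delta u) linear_sum /dotv; apply: eq_bigr => i _.
by rewrite linearZ mxE /= mulrC.
Qed.

Lemma diff_small (R : realType) d (W : normedModType R) (F : 'rV[R]_d -> W) x :
  differentiable F x -> forall eps, 0 < eps ->
  \forall h \near (0 : 'rV[R]_d), `|F (h + x) - F x - 'd F x h| <= eps * `|h|.
Proof.
move=> dF eps e0; have /eqaddoP H := diff_locally dF.
have := H eps e0; apply: filterS => h /=.
by rewrite opprD addrA.
Qed.

Lemma lim_ge_eps (R : realType) (u : nat -> R) L a :
  u @ \oo --> L -> (forall eps, 0 < eps -> \forall k \near \oo, a <= u k + eps) ->
  a <= L.
Proof.
move=> uL H; apply/ler_addgt0Pr => e e0.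
have e2 : 0 < e / 2 by rewrite divr_gt0.
have := H _ e2; move/cvgrPdist_lt: uL => /(_ _ e2) H2 H1.
have [k [Hk1 Hk2]] : exists k, a <= u k + e / 2 /\ `|L - u k| < e / 2.
  by have [k ?] := filter_ex (filterI H1 H2); exists k.
move: Hk2; rewrite ltr_norml => /andP[h1 h2]; lra.
Qed.

Lemma lim_le_eps (R : realType) (u : nat -> R) L a :
  u @ \oo --> L -> (\forall k \near \oo, u k <= a) -> L <= a.
Proof.
move=> uL H; rewrite -lerN2; apply: (@lim_ge_eps _ (fun k => - u k)).
  exact: cvgN.
move=> e e0; apply: filterS H => k /=; lra.
Qed.

Lemma dq (R : realType) d (W : normedModType R) (F : 'rV[R]_d -> W) x
  (t : nat -> R) (w : 'rV[R]_d) (wk : nat -> 'rV[R]_d) :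
  differentiable F x -> (forall k, 0 < t k) -> t @ \oo --> (0 : R) ->
  wk @ \oo --> w ->
  (fun k => (t k)^-1 *: (F (x + t k *: wk k) - F x)) @ \oo --> 'd F x w.
Proof.
move=> dF tp t0 ww.
have dw : (fun k => 'd F x (wk k)) @ \oo --> 'd F x w.
  by apply: (continuous_cvg _ _ ww); apply: diff_continuous.
pose e := fun k => (t k)^-1 *: (F (x + t k *: wk k) - F x) - 'd F x (wk k).
have e0 : e @ \oo --> (0 : W).
  apply/cvgrPdist_lt => eps eps0.
  pose M := `|w| + 1.
  have M0 : 0 < M by rewrite /M ltr_wpDl.
  have HM : \forall k \near \oo, `|wk k| <= M.
    move/cvgrPdist_lt: ww => /(_ _ ltr01); apply: filterS => k Hk.
    have := ler_normD w (wk k - w); rewrite addrC subrK => H1.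
    apply: (le_trans H1); rewrite /M lerD2l; apply: ltW.
    by rewrite -normrN opprB.
  have ep : 0 < eps / (2 * M) by rewrite divr_gt0 // mulr_gt0.
  have hk : (fun k => t k *: wk k) @ \oo --> (0 : 'rV[R]_d).
    rewrite -[X in _ --> X](scale0r w); exact: cvgZ.
  have Hn := hk _ (diff_small dF ep).
  apply: filterS (filterI HM Hn) => k [HMk /= Hnk].
  rewrite sub0r normrN /e.
  have tk0 : t k != 0 by rewrite gt_eqF.
  have -> : (t k)^-1 *: (F (x + t k *: wk k) - F x) - 'd F x (wk k) =
            (t k)^-1 *: (F (t k *: wk k + x) - F x - 'd F x (t k *: wk k)).
    by rewrite linearZ [in RHS]scalerBr scalerA mulVf // scale1r [t k *: wk k + x]addrC.
  rewrite normrZ gtr0_norm ?invr_gt0 //.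
  apply: (le_lt_trans (ler_wpM2l _ Hnk)); first by rewrite invr_ge0 ltW.
  rewrite normrZ gtr0_norm //.
  have M0' : M != 0 by rewrite gt_eqF.
  have -> : (t k)^-1 * (eps / (2 * M) * (t k * `|wk k|)) = eps / (2 * M) * `|wk k|.
    by field; rewrite tk0 M0'.
  apply: (le_lt_trans (ler_wpM2l (ltW ep) HMk)).
  have -> : eps / (2 * M) * M = eps / 2 by field; rewrite M0'.
  lra.
have -> : (fun k => (t k)^-1 *: (F (x + t k *: wk k) - F x)) =
          (fun k => e k + 'd F x (wk k)).
  by apply: funext => k; rewrite /e subrK.
rewrite -[X in _ --> X]add0r; exact: cvgD.
Qed.

Lemma tan_sub_lin (R : realType) d s (P : 'rV[R]_d -> 'rV[R]_s) D z :
  (forall x, differentiable P x) ->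
  forall w, tangent_cone (feas P D) z w -> lin_tangent_cone P D z w.
Proof.
move=> dP w [t [wk [tp [t0 [ww Hin]]]]].
rewrite /lin_tangent_cone /tangent_cone /=.
exists t, (fun k => (t k)^-1 *: (P (z + t k *: wk k) - P z)).
split=> //; split=> //; split; first exact: dq.
move=> k; rewrite scalerA mulfV ?gt_eqF // scale1r addrC subrK.
exact: Hin k.
Qed.

Lemma enorm_lip (R : realType) d (w v : 'rV[R]_d) :
  enorm w <= enorm v + d.+1%:R * `|w - v|.
Proof.
have := enormD v (w - v); rewrite addrC subrK => H.
apply: (le_trans H); rewrite lerD2l; exact: enorm_le_norm.
Qed.

Lemma nec (R : realType) d (f : 'rV[R]_d -> R) Om z a :
  differentiable f z -> 0 < a ->
  (\forall y \near z, Om y -> f z + a * enorm (y - z) <= f y) ->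
  forall w, tangent_cone Om z w -> a * enorm w <= 'd f z w.
Proof.
move=> df a0 Hs w [t [wk [tp [t0 [ww Hin]]]]].
have q := dq df tp t0 ww.
have hz : (fun k => z + t k *: wk k) @ \oo --> z.
  rewrite -[X in _ --> X]addr0; apply: cvgD; first exact: cvg_cst.
  rewrite -[X in _ --> X](scale0r w); exact: cvgZ.
have Hk : \forall k \near \oo, (Om (z + t k *: wk k) ->
    f z + a * enorm (z + t k *: wk k - z) <= f (z + t k *: wk k)) := hz _ Hs.
refine (lim_ge_eps q _).
move=> eps e0.
pose c := a * d.+1%:R.
have c0 : 0 < c by rewrite mulr_gt0.
have ec : 0 < eps / c by rewrite divr_gt0.
move/cvgrPdist_lt: ww => /(_ _ ec) Hw.
apply: filterS (filterI Hk Hw) => k [/= Hk1 Hk2].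
have := Hk1 (Hin k).
rewrite addrAC subrr add0r enormZ gtr0_norm // => H1.
have tk := tp k.
have H2 : a * enorm (wk k) <= (t k)^-1 * (f (z + t k *: wk k) - f z).
  rewrite -(ler_pM2l tk) [t k * ((t k)^-1 * _)]mulrA mulfV ?gt_eqF // mul1r.
  rewrite mulrCA; lra.
have H3 := enorm_lip w (wk k).
have H4 : c * `|w - wk k| < eps.
  by rewrite -ltr_pdivlMl // mulrC.
rewrite /=.
have : a * enorm w <= a * enorm (wk k) + c * `|w - wk k|.
  rewrite /c -mulrA -mulrDr ler_pM2l //.
have -> : (t k)^-1 *: (f (z + t k *: wk k) - f z) =
  (t k)^-1 * (f (z + t k *: wk k) - f z) by [].
lra.
Qed.

Lemma ggcq_ext (R : realType) d s (f : 'rV[R]_d -> R) (P : 'rV[R]_d -> 'rV[R]_s)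
  D z a : 0 < a -> GGCQ P D z ->
  (forall w, tangent_cone (feas P D) z w -> a * enorm w <= 'd f z w) ->
  forall u, lin_tangent_cone P D z u -> a * enorm u <= 'd f z u.
Proof.
move=> a0 HG Ht u Hu.
have [G HGr] := gradient f z.
have [u0|un0] := eqVneq (enorm u) 0.
  by rewrite u0 mulr0 (enorm_eq0 u0) linear0.
have up : 0 < enorm u by rewrite lt_def un0 enorm_ge0.
pose zs := (a / enorm u) *: u - G.
have Hzs : reg_normal_cone (feas P D) z zs.
  move=> w Hw; rewrite /zs dotvDl dotvNl dotvZl -HGr.
  have H1 := Ht w Hw.
  have H2 : a / enorm u * dotv u w <= a * enorm w.
    apply: (le_trans (ler_wpM2l _ (CS u w))).
      by rewrite divr_ge0 // ltW.
    rewrite mulrA divfK //.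
  lra.
rewrite /GGCQ in HG; rewrite HG in Hzs.
have := Hzs u Hu; rewrite /zs dotvDl dotvNl dotvZl -HGr -enorm_sqr.
have -> : a / enorm u * enorm u ^+ 2 = a * enorm u.
  by rewrite expr2 mulrA divfK.
lra.
Qed.

Lemma suff_sharp (R : realType) d (f : 'rV[R]_d -> R) Om z a :
  differentiable f z -> 0 < a ->
  (forall w, tangent_cone Om z w -> a * enorm w <= 'd f z w) ->
  sharp_min f Om z.
Proof.
move=> df a0 Ht.
pose c := (d.+1%:R : R)^-1.
have c0 : 0 < c by rewrite invr_gt0 ltr0n.
pose b := a * c / 2.
have b0 : 0 < b by rewrite /b divr_gt0 // mulr_gt0.
exists b => //.
apply: contrapT => nH.
have seq : forall k : nat, exists y, enorm (y - z) < (k.+1%:R)^-1 /\ Om y /\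
    f y < f z + b * enorm (y - z).
  move=> k; apply: contrapT => Hno; apply: nH.
  apply/nbhs_normP.
  have kp : (0 : R) < k.+1%:R by rewrite ltr0n.
  exists (c / k.+1%:R); first by rewrite /= divr_gt0.
  move=> y /= Hy Omy.
  rewrite leNgt; apply/negP => Hlt; apply: Hno; exists y; split => //.
  apply: (le_lt_trans (enorm_le_norm _)).
  rewrite -normrN opprB.
  have dp : (0 : R) < d.+1%:R by rewrite ltr0n.
  have <- : d.+1%:R * (c / k.+1%:R) = k.+1%:R^-1.
    by rewrite /c mulrA mulfV ?gt_eqF // mul1r.
  by rewrite ltr_pM2l.
have [Y HY] := choice seq.
have tp : forall k, 0 < enorm (Y k - z).
  move=> k; have [_ [_ H]] := HY k.
  rewrite lt_def enorm_ge0 andbT; apply/eqP => E.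
  have /subr0_eq Yz := enorm_eq0 E.
  by rewrite E mulr0 addr0 Yz ltxx in H.
pose t k := enorm (Y k - z).
pose wk k := (t k)^-1 *: (Y k - z).
have Yeq : forall k, z + t k *: wk k = Y k.
  by move=> k; rewrite /wk scalerA mulfV ?gt_eqF ?tp // scale1r addrC subrK.
have ew : forall k, enorm (wk k) = 1.
  by move=> k; rewrite /wk enormZ gtr0_norm ?invr_gt0 ?tp // mulVf ?gt_eqF ?tp.
have nw_le : forall k, `|wk k| <= 1.
  by move=> k; rewrite -(ew k); apply: norm_le_enorm.
have dp : (0 : R) < d.+1%:R by rewrite ltr0n.
have nw_ge : forall k, c <= `|wk k|.
  move=> k; rewrite /c -(ler_pM2l dp) mulfV ?gt_eqF // -[leLHS](ew k).
  exact: enorm_le_norm.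
pose A := closed_ball (0 : 'rV[R]_d) 1.
have cA : compact A.
  apply: bounded_closed_compact; last exact: closed_ball_closed.
  exists 1; split => // M M1 x.
  rewrite /A closed_ballE // /closed_ball_ /= sub0r normrN => Hx.
  by apply: (le_trans Hx); apply: ltW.
have FA : \forall k \near \oo, A (wk k).
  apply: nearW => k; rewrite /A closed_ballE // /closed_ball_ /= sub0r normrN.
  exact: nw_le.
have [w [Aw clw]] := cA (wk @ \oo) _ FA.
have clu : forall j (r : R), 0 < r -> exists k, (j <= k)%N /\ `|w - wk k| < r.
  move=> j r r0.
  have := clw (wk @` [set k | (j <= k)%N]) (ball w r).
  case.
  - apply: filterS (nbhs_infty_ge j) => k jk; by exists k.
  - exact: nbhsx_ballx.
  move=> v [[k jk <-] Hv]; exists k; split => //.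
  by rewrite -ball_normE in Hv.
have clu' : forall j, exists k, (j <= k)%N /\ `|w - wk k| < (j.+1%:R)^-1.
  by move=> j; apply: clu; rewrite invr_gt0 ltr0n.
have [K HK] := choice clu'.
have c2 : 0 < c / 2 by rewrite divr_gt0.
have [k0 [_ Hk0]] := clu 0%N (c / 2) c2.
have wpos : c / 2 < enorm w.
  apply: (lt_le_trans _ (norm_le_enorm w)).
  have := ler_normB w (w - wk k0); rewrite opprB addrC subrK => H.
  have := nw_ge k0; lra.
have t'p : forall j, 0 < t (K j) by move=> j; exact: tp.
have invK : forall j, (((K j).+1)%:R : R)^-1 <= (j.+1%:R)^-1.
  move=> j; have [jK _] := HK j.
  by rewrite lef_pV2 ?posrE ?ltr0n // ler_nat ltnS.
have t'0 : (fun j => t (K j)) @ \oo --> (0 : R).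
  apply/cvgrPdist_lt => eps e0.
  apply: filterS (near_infty_natSinv_lt (PosNum e0)) => j /= Hj.
  rewrite sub0r normrN gtr0_norm ?t'p //.
  have [Hy _] := HY (K j).
  apply: (lt_trans Hy); apply: (le_lt_trans (invK j)); exact: Hj.
have w'w : (fun j => wk (K j)) @ \oo --> w.
  apply/cvgrPdist_lt => eps e0.
  apply: filterS (near_infty_natSinv_lt (PosNum e0)) => j /= Hj.
  have [_ H] := HK j.
  by apply: (lt_trans H); exact: Hj.
have Tw : tangent_cone Om z w.
  exists (fun j => t (K j)), (fun j => wk (K j)).
  split => //; split => //; split => // j.
  rewrite Yeq; by have [_ [H _]] := HY (K j).
have H1 := Ht w Tw.
have q := dq df t'p t'0 w'w.
have H2 : 'd f z w <= b.
  apply: (lim_le_eps q); apply: nearW => j /=.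
  rewrite Yeq.
  have [_ [_ H]] := HY (K j).
  have tj := t'p j.
  have -> : (t (K j))^-1 *: (f (Y (K j)) - f z) =
    (t (K j))^-1 * (f (Y (K j)) - f z) by [].
  rewrite ler_pdivrMl //.
  rewrite -/(t (K j)) in H; lra.
have : a * (c / 2) < a * enorm w by rewrite ltr_pM2l.
rewrite /b in H2; lra.
Qed.

Theorem lemma4p4 (R : realType) (d s : nat) (f : 'rV[R]_d -> R)
  (P : 'rV[R]_d -> 'rV[R]_s) (D : set 'rV[R]_s) (zbar : 'rV[R]_d) :
  C1R f -> C1 P -> closed D -> feas P D zbar -> GGCQ P D zbar ->
  (sharp_min f (feas P D) zbar <->
   exists2 alpha' : R, 0 < alpha' &
     forall u, lin_tangent_cone P D zbar u -> alpha' * enorm u <= 'd f zbar u).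
Proof.
move=> [df _] [dP _] _ _ hG; split.
  move=> [a a0 Hs]; exists a => //.
  apply: ggcq_ext => // w Hw.
  exact: (nec (df zbar) a0 Hs).
move=> [a a0 H].
apply: (suff_sharp (df zbar) a0) => w Hw.
apply: H; exact: tan_sub_lin dP w Hw.
Qed.
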